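(* Let $X$ be a topological space, let $(S,\mathcal S)$ be an $\alpha$-scaffold in $X$, and let $\mathcal U$ be a collection of open subsets of $X$ with $|\mathcal U|<\mathfrak b$. Then there exists $S'\le_{\mathcal S}S$ such that every $U\in\mathcal U$ with $\mathrm{cor}\,S'\in U$ contains all but finitely many $T\in\mathcal S'^-$, where $\mathcal S'$ is the stratification of $S'$ witnessing $S'\le_{\mathcal S}S$.
   Context: $\mathfrak b$ is the least cardinality of an unbounded (with respect to eventual domination) family in $\omega^\omega$. Scaffolds in a space $X$ are defined by recursion. A pair $(S,\mathcal S)$ with $S\subseteq X$, $\mathcal S\subseteq 2^S$ is: (S.0) a $0$-scaffold if $S=\{x\}$, $\mathcal S=\{S\}$; then $\mathrm{ht}(S)=\mathrm{ht}_S(x)=0$ and $\mathrm{cor}\,S=x$. (S.1) an $\alpha$-scaffold if there are $x\in S$, pairwise disjoint open sets $U_n\subseteq X$, and $\alpha_n$-scaffolds $(S_n,\mathcal S_n)$ $(n\in\omega)$ with $(\alpha_n)$ nondecreasing, $\alpha=\min\{\beta:\beta>\alpha_n\text{ for all }n\}$, $\mathrm{cor}\,S_n\to x$, $\overline{S_n}\subseteq U_n$, $x\notin\overline{U_n}$, $S=\{x\}\cup\bigcup_nS_n$, $\mathcal S=\{S\}\cup\bigcup_n\mathcal S_n$; then $\mathrm{ht}(S)=\mathrm{ht}_S(x)=\alpha$, $\mathrm{ht}_S(x')=\mathrm{ht}_{S_n}(x')$ for $x'\in S_n$, and $\mathrm{cor}\,S=x$. $\mathcal S$ is called a stratification of $S$.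 For $S''\in\mathcal S$ let $\mathcal S|_{S''}=\{T\in\mathcal S:T\subseteq S''\}$. $\mathcal S^-$ is the set of $\subseteq$-maximal elements of $\mathcal S\setminus\{S\}$. Proper subscaffolds are defined recursively: for $S'\subseteq S$, $S'\le_{\mathcal S}S$ means $\mathrm{cor}\,S'=\mathrm{cor}\,S$ and there is a stratification $\mathcal S'$ of $S'$ such that $\mathcal S'^-\ne\emptyset$ whenever $\mathcal S^-\neq\emptyset$, and each $\beta$-scaffold $B'\in\mathcal S'^-$ satisfies $B'\le_{\mathcal S|_B}B$ for some $\beta$-scaffold $B\in\mathcal S^-$. *)

(* Defs.v *)
From HB Require Import structures.
From mathcomp Require Import all_boot all_order all_algebra.
From mathcomp Require Import all_classical all_reals all_analysis.
Set Implicit Arguments. Unset Strict Implicit. Unset Printing Implicit Defensive.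
Local Open Scope classical_set_scope.

(* Countable ordinals (heights) as well-founded countably-branching trees:
   [TZ] is 0, [TO a] is the least ordinal strictly above every [a n]
   (= sup_n (a n + 1)). Ordinal order on trees: *)
Inductive tord : Type := TZ : tord | TO : (nat -> tord) -> tord.

Fixpoint tle (t s : tord) : Prop :=
  match t with
  | TZ => True
  | TO f => forall n, match s with
                      | TZ => False
                      | TO g => exists m, tle (f n) (g m)
                      end
  end.

Definition teq (t s : tord) : Prop := tle t s /\ tle s t.

(* [scaffold a S SS x]: (S, SS) is an a-scaffold in X with cor S = x. *)
Inductive scaffold {X : topologicalType} :
    tord -> set X -> set (set X) -> X -> Prop :=
| scaffold0 (x : X) : scaffold TZ [set x] [set [set x]] x
| scaffoldS (x : X) (U : nat -> set X) (Sn : nat -> set X)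
    (SSn : nat -> set (set X)) (a : nat -> tord) (xn : nat -> X) :
    (forall n, scaffold (a n) (Sn n) (SSn n) (xn n)) ->
    (forall n, tle (a n) (a n.+1)) ->
    (forall n, open (U n)) ->
    (forall n m, n <> m -> U n `&` U m = set0) ->
    xn @ \oo --> x ->
    (forall n, closure (Sn n) `<=` U n) ->
    (forall n, ~ closure (U n) x) ->
    scaffold (TO a) (x |` \bigcup_n Sn n)
      ([set x |` \bigcup_n Sn n] `|` \bigcup_n SSn n) x.

Definition restr {X : Type} (SS : set (set X)) (S'' : set X) : set (set X) :=
  [set T | SS T /\ T `<=` S''].

Definition maxel {X : Type} (S : set X) (SS : set (set X)) : set (set X) :=
  [set T | SS T /\ T <> S /\
     forall T', SS T' -> T' <> S -> T `<=` T' -> T' = T].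

(* [subsc S' SS' S SS]: the stratification SS' of S' witnesses S' <=_{SS} S. *)
Inductive subsc {X : topologicalType} :
    set X -> set (set X) -> set X -> set (set X) -> Prop :=
| subscI (S' : set X) (SS' : set (set X)) (S : set X) (SS : set (set X)) :
    (exists x, (exists a, scaffold a S' SS' x) /\ (exists b, scaffold b S SS x)) ->
    (maxel S SS !=set0 -> maxel S' SS' !=set0) ->
    (forall B', maxel S' SS' B' ->
       forall (a : tord) (y : X), scaffold a B' (restr SS' B') y ->
       exists B, maxel S SS B /\
         (exists (b : tord) (z : X), scaffold b B (restr SS B) z /\ teq a b) /\
         exists TT, subsc B' TT B (restr SS B)) ->
    subsc S' SS' S SS.

Definition edom (f g : nat -> nat) : Prop := \forall n \near \oo, (f n <= g n)%N.
Definition unbounded_family (F : set (nat -> nat)) : Prop :=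
  ~ exists g, forall f, F f -> edom f g.
Definition card_lt_b {T : Type} (A : set T) : Prop :=
  forall F : set (nat -> nat), unbounded_family F ->
    ((A #<= F) /\ ~ (F #<= A))%card.

(* Main.v *)
Require Import Defs.
From HB Require Import structures.
From mathcomp Require Import all_boot all_order all_algebra.
From mathcomp Require Import all_classical all_reals all_analysis.
Local Open Scope classical_set_scope.
Set Bullet Behavior "Strict Subproofs".
Lemma tle_refl t : tle t t.
Proof. elim: t => [//|f IH] /= n; exists n; exact: IH. Qed.

Lemma tle_trans t s r : tle t s -> tle s r -> tle t r.
Proof.
elim: t s r => [//|f IH] s r.
case: s => [|g] /=; first by move=> H; case: (H 0).
case: r => [|h] /=; first by move=> _ H; case: (H 0).
move=> H1 H2 n; have [m Hm] := H1 n; have [k Hk] := H2 m.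
by exists k; exact: IH Hm Hk.
Qed.

Lemma teq_refl t : teq t t. Proof. by split; apply: tle_refl. Qed.
Lemma teq_sym t s : teq t s -> teq s t. Proof. by case. Qed.
Lemma teq_trans t s r : teq t s -> teq s r -> teq t r.
Proof. by move=> [? ?] [? ?]; split; apply: tle_trans; eauto. Qed.

Lemma tle_TO f g : (forall n, tle (f n) (g n)) -> tle (TO f) (TO g).
Proof. by move=> H /= n; exists n. Qed.

Lemma teq_TO f g : (forall n, teq (f n) (g n)) -> teq (TO f) (TO g).
Proof. by move=> H; split; apply: tle_TO => n; case: (H n). Qed.

Lemma tle_mono f : (forall n, tle (f n) (f n.+1)) -> forall n k, tle (f n) (f (n + k)%N).
Proof.
move=> H n k; elim: k => [|k IH]; first by rewrite addn0; apply: tle_refl.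
by rewrite addnS; apply: tle_trans IH (H _).
Qed.

Lemma teq_shift f N : (forall n, tle (f n) (f n.+1)) -> teq (TO (fun k => f (k + N)%N)) (TO f).
Proof.
move=> H; split=> n /=; first by exists (n + N)%N; apply: tle_refl.
by exists n; apply: tle_mono.
Qed.
Arguments tle_trans {t s r}. Arguments teq_trans {t s r}.
Section Basic.
Variable X : topologicalType.

Lemma scaf_basic a S SS (x : X) : scaffold a S SS x ->
  [/\ S x, SS S & forall T, SS T -> T `<=` S /\ exists t, T t].
Proof.
elim => {a S SS x} [x|x U Sn SSn a xn Hs IH Ha HU Hd Hc Hcl Hx].
- split => // T ->; split => //; by exists x.
- split; [by left|by left|].
  move=> T [->|[n _ HT]]; first by split => //; exists x; left.
  have [_ _ H] := IH n; have [HTS [t Ht]] := H T HT.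
  by split; [move=> y /HTS Hy; right; exists n | exists t].
Qed.
Arguments scaf_basic {a S SS x}.

Variables (x : X) (U : nat -> set X) (Sn : nat -> set X)
    (SSn : nat -> set (set X)) (a : nat -> tord) (xn : nat -> X).
Hypotheses (Hs : forall n, scaffold (a n) (Sn n) (SSn n) (xn n))
  (HU : forall n, open (U n))
  (Hd : forall n m, n <> m -> U n `&` U m = set0)
  (Hcl : forall n, closure (Sn n) `<=` U n)
  (Hx : forall n, ~ closure (U n) x).

Let S := x |` \bigcup_n Sn n.
Let SS := [set S] `|` \bigcup_n SSn n.

Lemma notin_Sn n : ~ Sn n x.
Proof.
move=> h.
have h1 : closure (Sn n) x by exact: (@subset_closure _ (Sn n)).
have h2 : U n x by exact: Hcl.
have h3 : closure (U n) x by exact: (@subset_closure _ (U n)).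
exact: (Hx n h3).
Qed.

Lemma Sn_sub_U n : Sn n `<=` U n.
Proof. by move=> y h; apply: Hcl; apply: subset_closure. Qed.

Lemma Sn_meet n m y : Sn n y -> Sn m y -> n = m.
Proof.
move=> h1 h2; apply/eqP/negPn/negP => /eqP ne.
have : (U n `&` U m) y by split; apply: Sn_sub_U.
by rewrite Hd.
Qed.

Arguments Sn_meet {n m y}.

Lemma SSn_sub n T : SSn n T -> T `<=` Sn n /\ exists t, T t.
Proof. by have [_ _ H] := scaf_basic (Hs n); apply: H. Qed.

Arguments SSn_sub {n T}.

Lemma SSn_neq n T : SSn n T -> T <> S.
Proof.
move=> /SSn_sub [HT _] E; have : T x by rewrite E; left.
by move/HT; apply: notin_Sn.
Qed.

Arguments SSn_neq {n T}.

Lemma maxel_char T : maxel S SS T <-> exists n, T = Sn n.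
Proof.
split.
- move=> [HSS [HTS Hmax]]; case: HSS => [E|[n _ HT]]; first by [].
  exists n; have [HTn _] := SSn_sub HT.
  symmetry; apply: Hmax => //.
  + by right; exists n => //; have [_ ? _] := scaf_basic (Hs n).
  + by apply: SSn_neq; have [_ ? _] := scaf_basic (Hs n); eassumption.
- move=> [n ->]; have [xin SSin _] := scaf_basic (Hs n).
  have SSS : SS (Sn n) by right; exists n.
  have neq : Sn n <> S by apply: (SSn_neq SSin).
  split => //; split => // T' [->//|[m _ HT']] _ sub.
  have [HT'm _] := SSn_sub HT'.
  have nm : n = m by apply: (Sn_meet xin); apply/HT'm/sub.
  subst m; apply/seteqP; split => // y /HT'm //.
Qed.

Lemma restr_char n : restr SS (Sn n) = SSn n.
Proof.
apply/seteqP; split.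
- move=> T [[->|[m _ HT]] sub].
  + by exfalso; apply: (notin_Sn n); apply: sub; left.
  + have [HTm [t Ht]] := SSn_sub HT.
    by have nm := Sn_meet (sub _ Ht) (HTm _ Ht); subst m.
- move=> T HT; split; first by right; exists n.
  by have [] := SSn_sub HT.
Qed.

End Basic.
Arguments scaf_basic {X a S SS x}.
Arguments maxel_char {X x U Sn SSn a xn}.
Arguments restr_char {X x U Sn SSn a xn}.
Arguments notin_Sn {X x U Sn}.
Arguments Sn_meet {X U Sn}.
Arguments SSn_sub {X Sn SSn a xn}.
Arguments Sn_sub_U {X U Sn}.
Arguments SSn_neq {X x U Sn SSn a xn}.
Definition dec {X : topologicalType} (x : X) (U Sn : nat -> set X)
  (SSn : nat -> set (set X)) (a : nat -> tord) (xn : nat -> X) : Prop :=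
  (forall n, scaffold (a n) (Sn n) (SSn n) (xn n)) /\
      (forall n, tle (a n) (a n.+1)) /\
      (forall n, open (U n)) /\
      (forall n m, n <> m -> U n `&` U m = set0) /\
      xn @ \oo --> x /\
      (forall n, closure (Sn n) `<=` U n) /\
      (forall n, ~ closure (U n) x).

Lemma scaf_cases {X : topologicalType} b S SS (y : X) : scaffold b S SS y ->
  (b = TZ /\ S = [set y] /\ SS = [set [set y]]) \/
  exists U Sn SSn a xn, [/\ b = TO a, S = y |` \bigcup_n Sn n,
     SS = [set y |` \bigcup_n Sn n] `|` \bigcup_n SSn n & dec y U Sn SSn a xn].
Proof.
case => [x|x U Sn SSn a xn Hs Ha HU Hd Hc Hcl Hx]; first by left.
by right; exists U, Sn, SSn, a, xn; split => //; do 6 (split => //).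
Qed.

Arguments scaf_cases {X b S SS y}.

Lemma scaf_unique {X : topologicalType} a S SS (x : X) : scaffold a S SS x ->
  forall b y, scaffold b S SS y -> teq a b /\ x = y.
Proof.
elim => {a S SS x} [x|x U Sn SSn a xn Hs IH Ha HU Hd Hc Hcl Hx] b y H2.
- case: (scaf_cases H2) => [[-> [E _]]|[U' [Sn' [SSn' [a' [xn' [-> ES _ [Hs' [_ [_ [Hd' [_ [Hcl' Hx']]]]]]]]]]]]].
  + split; first exact: teq_refl.
    by have : [set y] x by rewrite -E.
  + exfalso.
    have yx : y = x by have : [set x] y by rewrite ES; left.
    have [h0 _ _] := scaf_basic (Hs' 0).
    have : [set x] (xn' 0) by rewrite ES; right; exists 0%N.
    move=> /= e; apply: (notin_Sn Hcl' Hx' 0); by rewrite yx -e.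
- case: (scaf_cases H2) => [[-> [E _]]|[U' [Sn' [SSn' [a' [xn' [-> ES ESS [Hs' [Ha' [HU' [Hd' [Hc' [Hcl' Hx']]]]]]]]]]]]].
  + exfalso.
    have xy : x = y by have : [set y] x by rewrite -E; left.
    have [h0 _ _] := scaf_basic (Hs 0).
    have : [set y] (xn 0) by rewrite -E; right; exists 0%N.
    move=> /= e; apply: (notin_Sn Hcl Hx 0); by rewrite xy -e.
  + have M1 := maxel_char Hs Hd Hcl Hx.
    have M2 := maxel_char Hs' Hd' Hcl' Hx'.
    rewrite -ESS -ES in M2.
    have R1 := restr_char Hs Hd Hcl Hx.
    have R2 := restr_char Hs' Hd' Hcl' Hx'.
    rewrite -ESS in R2.
    have match1 : forall n, exists m, Sn n = Sn' m /\ teq (a n) (a' m).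
      move=> n; have /M2 [m Em] : maxel (x |` \bigcup_n Sn n) (x |` \bigcup_n Sn n |` \bigcup_n SSn n) (Sn n)
        by apply/M1; exists n.
      exists m; split => //.
      have E2 : SSn n = SSn' m by rewrite -R1 -R2 Em.
      have := Hs' m; rewrite -Em -E2 => /IH [] //.
    have match2 : forall m, exists n, Sn n = Sn' m /\ teq (a n) (a' m).
      move=> m; have /M1 [n En] : maxel (x |` \bigcup_n Sn n) (x |` \bigcup_n Sn n |` \bigcup_n SSn n) (Sn' m)
        by apply/M2; exists m.
      exists n; split; first by rewrite En.
      have E2 : SSn n = SSn' m by rewrite -R1 -R2 En.
      have := Hs' m; rewrite En -E2 => /IH [] //.
    split.
    * split => /= n.
      -- by have [m [_ [h _]]] := match1 n; exists m.
      -- by have [m [_ [_ h]]] := match2 n; exists m.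
    * have : (x |` \bigcup_n Sn n) y by rewrite ES; left.
      case => [//|[n _ Hy]].
      have [m [Em _]] := match1 n.
      exfalso; apply: (notin_Sn Hcl' Hx' m); by rewrite -Em.
Qed.

Arguments scaf_unique {X a S SS x}.
Lemma finite_nat_bound (A : set nat) : finite_set A -> exists N, forall k, A k -> (k < N)%N.
Proof.
move=> /finite_fsetP [F ->]; exists (\max_(i <- finmap.enum_fset F) i).+1 => k Hk.
rewrite ltnS; exact: (@leq_bigmax_seq _ _ xpredT (fun i => i) k).
Qed.
Lemma dec_scaf {X : topologicalType} (y : X) U Sn SSn a xn : dec y U Sn SSn a xn ->
  scaffold (TO a) (y |` \bigcup_n Sn n) ([set y |` \bigcup_n Sn n] `|` \bigcup_n SSn n) y.
Proof. by move=> [Hs [Ha [HU [Hd [Hc [Hcl Hx]]]]]]; apply: scaffoldS. Qed.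

Arguments dec_scaf {X y U Sn SSn a xn}.

Lemma dec_shift {X : topologicalType} (y : X) U Sn SSn a xn N : dec y U Sn SSn a xn ->
  dec y (fun k => U (k + N)%N) (fun k => Sn (k + N)%N) (fun k => SSn (k + N)%N)
    (fun k => a (k + N)%N) (fun k => xn (k + N)%N).
Proof.
move=> [Hs [Ha [HU [Hd [Hc [Hcl Hx]]]]]]; split => //; split; first by move=> n; rewrite addSn.
split => //; split.
  by move=> n m nm; apply: Hd => /eqP; rewrite eqn_add2r => /eqP.
split => //.
exact: (cvg_comp _ _ (cvg_addnr N) Hc).
Qed.

Lemma subsc_inv {X : topologicalType} (S' : set X) SS' S SS : subsc S' SS' S SS ->
  [/\ (exists x, (exists a, scaffold a S' SS' x) /\ (exists b, scaffold b S SS x)),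
    (maxel S SS !=set0 -> maxel S' SS' !=set0) &
    (forall B', maxel S' SS' B' ->
       forall (a : tord) (y : X), scaffold a B' (restr SS' B') y ->
       exists B, maxel S SS B /\
         (exists (b : tord) (z : X), scaffold b B (restr SS B) z /\ teq a b) /\
         exists TT, subsc B' TT B (restr SS B))].
Proof. by case. Qed.

Lemma prune {X : topologicalType} b S' SS' (y : X) : scaffold b S' SS' y ->
  exists (P : nat -> set X) (PP : nat -> set (set X)), forall N,
   [/\ exists bN, scaffold bN (P N) (PP N) y /\ teq bN b,
       P N `<=` S',
       forall S SS, subsc S' SS' S SS -> subsc (P N) (PP N) S SS &
       forall U, U y -> finite_set [set T | maxel S' SS' T /\ ~ T `<=` U] ->
         exists N0, forall N, (N0 <= N)%N -> P N `<=` U].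
Proof.
move=> H; case: (scaf_cases H) => [[Eb [ES ESS]]|[U [Sn [SSn [a [xn [Eb ES ESS D]]]]]]].
- exists (fun _ => S'), (fun _ => SS') => N; split => //.
  + by exists b; split => //; exact: teq_refl.
  + move=> V Vy _; exists 0%N => N' _; rewrite ES => z ->; exact: Vy.
- subst S' SS' b.
  exists (fun N => y |` \bigcup_k Sn (k + N)%N),
    (fun N => [set y |` \bigcup_k Sn (k + N)%N] `|` \bigcup_k SSn (k + N)%N) => N.
  have DN := @dec_shift _ _ _ _ _ _ _ N D.
  have [Hs [Ha [HU [Hd [Hc [Hcl Hx]]]]]] := D.
  have [HsN [HaN [HUN [HdN [HcN [HclN HxN]]]]]] := DN.
  split.
  + exists (TO (fun k => a (k + N)%N)); split; first exact: dec_scaf DN.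
    exact: teq_shift.
  + move=> z [->|[k _ h]]; [by left | by right; exists (k + N)%N].
  + move=> S SS /subsc_inv [[x0 [[a0 H0] [b0 Hb0]]] H2 H3].
    have [_ ex0] := scaf_unique H0 _ _ (dec_scaf D); subst x0.
    apply: subscI.
    * exists y; split; [by exists (TO (fun k => a (k + N)%N)); exact: dec_scaf DN | by exists b0].
    * move=> _; exists (Sn (0 + N)%N); apply/(maxel_char HsN HdN HclN HxN); by exists 0%N.
    * move=> B' /(maxel_char HsN HdN HclN HxN) [k EB] a1 y1.
      rewrite EB (restr_char HsN HdN HclN HxN k) /= -(restr_char Hs Hd Hcl Hx) => Hsc.
      apply: H3 Hsc; apply/(maxel_char Hs Hd Hcl Hx); by exists (k + N)%N.
  + move=> V Vy Hfin.
    have inj : {in Sn @^-1` [set T | maxel (y |` \bigcup_n Sn n)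
         ([set y |` \bigcup_n Sn n] `|` \bigcup_n SSn n) T /\ ~ T `<=` V] &, injective Sn}.
      move=> k m _ _ E.
      have [hk _ _] := scaf_basic (Hs k).
      by apply: (Sn_meet Hd Hcl k m (xn k)) => //; rewrite -E.
    have /finite_nat_bound [N0 HN0] := finite_preimage inj Hfin.
    exists N0 => N' le z [->|[k _ h]]; first exact: Vy.
    apply: contrapT => nz.
    have bad : (Sn @^-1` [set T | maxel (y |` \bigcup_n Sn n)
         ([set y |` \bigcup_n Sn n] `|` \bigcup_n SSn n) T /\ ~ T `<=` V]) (k + N')%N.
      split; first by apply/(maxel_char Hs Hd Hcl Hx); exists (k + N')%N.
      by move=> sub; apply: nz; apply: sub.
    have := HN0 _ bad; rewrite ltnNge => /negP; apply.
    by apply: leq_trans le _; apply: leq_addl.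
Qed.
Arguments prune {X b S' SS' y}.
Lemma main_ind {X : topologicalType} (UU : set (set X))
  (HUU : forall U, UU U -> open U) (Hb : card_lt_b UU) a S SS (x : X) :
  scaffold a S SS x ->
  exists a' S' SS', [/\ scaffold a' S' SS' x, teq a' a, S' `<=` S, subsc S' SS' S SS &
    forall U, UU U -> U x -> finite_set [set T | maxel S' SS' T /\ ~ T `<=` U]].
Proof.
elim => {a S SS x} [x|x U Sn SSn a xn Hs IH Ha HU Hd Hc Hcl Hx].
- have nomax : forall T, ~ maxel [set x] [set [set x]] T.
    by move=> T [HT [ne _]].
  exists TZ, [set x], [set [set x]]; split.
  + exact: scaffold0.
  + exact: teq_refl.
  + by [].
  + apply: subscI.
    * by exists x; split; exists TZ; apply: scaffold0.
    * by move=> [T /nomax].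
    * by move=> B' /nomax.
  + move=> V _ _; apply: (@sub_finite_set _ _ set0 _ (finite_set0 _)).
    by move=> T [/nomax].
- have D : dec x U Sn SSn a xn by split => //; do 5 (split => //).
  have IH' : forall n, exists p : (tord * set X) * set (set X),
     [/\ scaffold p.1.1 p.1.2 p.2 (xn n), teq p.1.1 (a n), p.1.2 `<=` Sn n,
         subsc p.1.2 p.2 (Sn n) (SSn n) &
         forall U, UU U -> U (xn n) -> finite_set [set T | maxel p.1.2 p.2 T /\ ~ T `<=` U]].
    move=> n; have [a' [S' [SS' H]]] := IH n; by exists (a', S', SS').
  have [p Hp] := choice IH'.
  have PR : forall n, exists q : (nat -> set X) * (nat -> set (set X)), forall N,
   [/\ exists bN, scaffold bN (q.1 N) (q.2 N) (xn n) /\ teq bN (p n).1.1,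
       q.1 N `<=` (p n).1.2,
       forall S SS, subsc (p n).1.2 (p n).2 S SS -> subsc (q.1 N) (q.2 N) S SS &
       forall U, U (xn n) -> finite_set [set T | maxel (p n).1.2 (p n).2 T /\ ~ T `<=` U] ->
         exists N0, forall N, (N0 <= N)%N -> q.1 N `<=` U].
    move=> n; have [H1 _ _ _ _] := Hp n.
    have [P [PP HP]] := prune H1; by exists (P, PP).
  have [q Hq] := choice PR.
  pose Q n N := (q n).1 N; pose QQ n N := (q n).2 N.
  have Hh1 : forall V : set X, exists hV : nat -> nat, forall n, UU V -> V (xn n) ->
      forall N, (hV n <= N)%N -> Q n N `<=` V.
    move=> V.
    suff : forall n, exists N0, UU V -> V (xn n) -> forall N, (N0 <= N)%N -> Q n N `<=` V.
      by move/choice => [f Hf]; exists f.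
    move=> n; case: (pselect (UU V /\ V (xn n))) => [[HV Vn]|nV]; last first.
      by exists 0%N => HV Vn; exfalso; apply: nV.
    have [_ _ _ _ Hfin] := Hp n.
    have [_ _ _ H4] := Hq n 0%N.
    have [N0 HN0] := H4 V Vn (Hfin V HV Vn).
    by exists N0 => _ _ N le; apply: HN0.
  have [h Hh] := choice Hh1.
  have [g Hg] : exists g, forall V, UU V -> V x -> edom (h V) g.
    apply: contrapT => nog.
    pose A := [set V | UU V /\ V x].
    have unb : unbounded_family (h @` A).
      move=> [g Hg]; apply: nog; exists g => V HV Vx.
      by apply: Hg; exists V.
    have [_ nle] := Hb _ unb; apply: nle.
    apply: card_le_trans (card_image_le h A) _.
    by apply: subset_card_le => V [].
  have Hc1 : forall n, exists c, scaffold c (Q n (g n)) (QQ n (g n)) (xn n) /\ teq c (a n).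
    move=> n; have [[bN [H1 H2]] _ _ _] := Hq n (g n).
    have [_ H3 _ _ _] := Hp n.
    by exists bN; split => //; apply: teq_trans H2 H3.
  have [c Hcc] := choice Hc1.
  have Dn : dec x U (fun n => Q n (g n)) (fun n => QQ n (g n)) c xn.
    split; first by move=> n; case: (Hcc n).
    split.
      move=> n; have [_ [e1 _]] := Hcc n; have [_ [_ e2]] := Hcc n.+1.
      exact: tle_trans e1 (tle_trans (Ha n) e2).
    split => //; split => //; split => //; split => //.
    move=> n; apply: subset_trans (Hcl n); apply: closureS.
    have [_ H2 _ _] := Hq n (g n); have [_ _ H3 _ _] := Hp n.
    exact: subset_trans H2 H3.
  have [Hs' [Ha' [HU' [Hd' [Hc' [Hcl' Hx']]]]]] := Dn.
  exists (TO c), (x |` \bigcup_n Q n (g n)),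
    ([set x |` \bigcup_n Q n (g n)] `|` \bigcup_n QQ n (g n)); split.
  + exact: dec_scaf Dn.
  + by apply: teq_TO => n; case: (Hcc n).
  + move=> z [->|[n _ hz]]; first by left.
    right; exists n => //.
    have [_ H2 _ _] := Hq n (g n); have [_ _ H3 _ _] := Hp n.
    exact: H3 (H2 _ hz).
  + apply: subscI.
    * exists x; split; [by exists (TO c); exact: dec_scaf Dn | by exists (TO a); exact: dec_scaf D].
    * move=> _; exists (Q 0%N (g 0%N)); apply/(maxel_char Hs' Hd' Hcl' Hx'); by exists 0%N.
    * move=> B' /(maxel_char Hs' Hd' Hcl' Hx') [n ->] a1 y1.
      rewrite (restr_char Hs' Hd' Hcl' Hx' n) => Hsc.
      exists (Sn n); split; first by apply/(maxel_char Hs Hd Hcl Hx); exists n.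
      rewrite (restr_char Hs Hd Hcl Hx n); split.
      -- exists (a n), (xn n); split => //.
         have [e1 e2] := Hcc n.
         have [e3 _] := scaf_unique Hsc _ _ e1.
         exact: teq_trans e3 e2.
      -- exists (QQ n (g n)).
         have [_ _ H3 _] := Hq n (g n); have [_ _ _ H4 _] := Hp n.
         exact: H3 _ _ H4.
  + move=> V HV Vx.
    have nb : nbhs x V by apply: open_nbhs_nbhs; split => //; apply: HUU.
    have [N1 _ HN1] := Hc _ nb.
    have [N2 _ HN2] := Hg V HV Vx.
    apply: (sub_finite_set _ (finite_image (fun n => Q n (g n)) (finite_II (maxn N1 N2)))).
    move=> T [/(maxel_char Hs' Hd' Hcl' Hx') [n ->] nsub].
    exists n => //=.
    rewrite ltnNge; apply/negP => le; apply: nsub.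
    have l1 : (N1 <= n)%N by apply: leq_trans le; apply: leq_maxl.
    have l2 : (N2 <= n)%N by apply: leq_trans le; apply: leq_maxr.
    apply: (Hh V n HV (HN1 _ l1) (g n)).
    exact: HN2.
Qed.

Theorem lemma12 (X : topologicalType) (a : tord) (S : set X)
    (SS : set (set X)) (x : X) (UU : set (set X)) :
  scaffold a S SS x ->
  (forall U, UU U -> open U) ->
  card_lt_b UU ->
  exists (S' : set X) (SS' : set (set X)),
    subsc S' SS' S SS /\
    forall U, UU U -> forall x', (exists a', scaffold a' S' SS' x') -> U x' ->
      finite_set [set T | maxel S' SS' T /\ ~ (T `<=` U)].
Proof.
move=> H HUU Hb.
have [a' [S' [SS' [H1 _ _ H4 H5]]]] := @main_ind _ UU HUU Hb _ _ _ _ H.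
exists S', SS'; split => // U HU x' [a'' H'] Ux'.
have [_ e] := scaf_unique H1 _ _ H'; subst x'.
exact: H5.
Qed.
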